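(* The assignments $L\mapsto\operatorname{Spec}L$ and $X\mapsto L_{\mathrm{open}}(X)$ form an adjoint pair of contravariant functors between the category of ideal lattices and the category of spectral spaces: for every ideal lattice $L$ and spectral space $X$ there are mutually inverse natural bijections between morphisms of ideal lattices $L\to L_{\mathrm{open}}(X)$ and continuous maps $X\to\operatorname{Spec}L$, given by $\phi\mapsto\big(x\mapsto\bigvee\{c \text{ compact}\mid x\notin\phi(c)\}\big)$ and $f\mapsto\big(a\mapsto f^{-1}(D(a))\big)$. Moreover, $L_{\mathrm{open}}$ is fully faithful, and an ideal lattice $L$ is isomorphic to one of the form $L_{\mathrm{open}}(X)$ if and only if every element of $L$ is semi-prime.
   Context: An ideal lattice is a poset $(L,\leq)$ with an associative multiplication such that: (L1) $L$ is a complete lattice; (L2) every element is a supremum of compact elements ($a$ is compact if $a\leq\sup A$ implies $a\leq\sup A'$ for some finite $A'\subseteq A$); (L3) multiplication distributes over binary joins on both sides; (L4) $1=\sup L$ is compact and is a two-sided identity; (L5) products of compact elements are compact. A morphism of ideal lattices $\phi\colon L\to L'$ is a map preserving arbitrary suprema, with $\phi(1)=1$ and $\phi(ab)=\phi(a)\phi(b)$. Prime: $p\neq1$ with $ab\leq p\Rightarrow a\leq p$ or $b\leq p$; semi-prime: $bb\leq a\Rightarrow b\leq a$. $\operatorname{Spec}L$: set of primes with closed sets $V(a)=\{p\mid a\leq p\}$, opens $D(a)=\{p\mid a\not\leq p\}$; a morphism $\phi\colon L\to L'$ induces the continuous map $\operatorname{Spec}L'\to\operatorname{Spec}L$, $p\mapsto\sup\{a\mid\phi(a)\leq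 p\}$. $L_{\mathrm{open}}(X)$ is the lattice of open subsets of $X$ with multiplication $U\cap V$; a continuous map $f$ induces $U\mapsto f^{-1}(U)$. A spectral space is a $T_0$, quasi-compact space whose quasi-compact open subsets are closed under finite intersections and form an open basis, and in which every non-empty irreducible closed subset has a generic point. *)

(* Defs.v *)
From Stdlib Require Import List Classical.
Import ListNotations.

Record latdata := LatData {
  lcar : Type;
  lle : lcar -> lcar -> Prop;
  lmul : lcar -> lcar -> lcar;
  lsup : (lcar -> Prop) -> lcar }.

Arguments lle {L} : rename.
Arguments lmul {L} : rename.
Arguments lsup {L} : rename.

Definition ltop (L : latdata) : lcar L := lsup (fun _ => True).
Definition ljoin {L : latdata} (a b : lcar L) : lcar L :=
  lsup (fun x => x = a \/ x = b).

Definition compact (L : latdata) (a : lcar L) : Prop :=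
  forall A : lcar L -> Prop, lle a (lsup A) ->
    exists l : list (lcar L), (forall x, In x l -> A x) /\
       lle a (lsup (fun x => In x l)).

Record ideal_lattice (L : latdata) : Prop := {
  il_refl : forall a : lcar L, lle a a;
  il_trans : forall a b c : lcar L, lle a b -> lle b c -> lle a c;
  il_antisym : forall a b : lcar L, lle a b -> lle b a -> a = b;
  il_sup_ub : forall (A : lcar L -> Prop) a, A a -> lle a (lsup A);
  il_sup_least : forall (A : lcar L -> Prop) b,
      (forall a, A a -> lle a b) -> lle (lsup A) b;
  il_assoc : forall a b c : lcar L, lmul a (lmul b c) = lmul (lmul a b) c;
  il_algebraic : forall a : lcar L,
      exists A : lcar L -> Prop, (forall c, A c -> compact L c) /\ a = lsup A;
  il_distl : forall a b c : lcar L, lmul a (ljoin b c) = ljoin (lmul a b) (lmul a c);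
  il_distr : forall a b c : lcar L, lmul (ljoin a b) c = ljoin (lmul a c) (lmul b c);
  il_top_compact : compact L (ltop L);
  il_mul1l : forall a : lcar L, lmul (ltop L) a = a;
  il_mul1r : forall a : lcar L, lmul a (ltop L) = a;
  il_mul_compact : forall a b : lcar L, compact L a -> compact L b -> compact L (lmul a b) }.

Definition is_hom (L L' : latdata) (phi : lcar L -> lcar L') : Prop :=
  (forall A : lcar L -> Prop,
      phi (lsup A) = lsup (fun y => exists x, A x /\ y = phi x)) /\
  phi (ltop L) = ltop L' /\
  (forall a b, phi (lmul a b) = lmul (phi a) (phi b)).

Definition prime (L : latdata) (p : lcar L) : Prop :=
  p <> ltop L /\ forall a b, lle (lmul a b) p -> lle a p \/ lle b p.

Definition semiprime (L : latdata) (a : lcar L) : Prop :=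
  forall b, lle (lmul b b) a -> lle b a.

Record top := Top {
  pt : Type;
  opn : (pt -> Prop) -> Prop;
  opn_full : opn (fun _ => True);
  opn_inter : forall U V, opn U -> opn V -> opn (fun x => U x /\ V x);
  opn_union : forall F : (pt -> Prop) -> Prop, (forall U, F U -> opn U) ->
      opn (fun x => exists U, F U /\ U x) }.

Arguments opn {t} : rename.

Definition continuous (X Y : top) (f : pt X -> pt Y) : Prop :=
  forall V : pt Y -> Prop, opn V -> opn (fun x => V (f x)).

Definition closed (X : top) (C : pt X -> Prop) : Prop := opn (fun x => ~ C x).

Definition closure (X : top) (S : pt X -> Prop) : pt X -> Prop :=
  fun y => forall C, closed X C -> (forall x, S x -> C x) -> C y.

Definition qcompact (X : top) (K : pt X -> Prop) : Prop :=
  forall F : (pt X -> Prop) -> Prop, (forall U, F U -> opn U) ->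
    (forall x, K x -> exists U, F U /\ U x) ->
    exists l : list (pt X -> Prop), (forall U, In U l -> F U) /\
      (forall x, K x -> exists U, In U l /\ U x).

Definition irreducible (X : top) (C : pt X -> Prop) : Prop :=
  forall C1 C2, closed X C1 -> closed X C2 ->
    (forall x, C x <-> C1 x \/ C2 x) ->
    (forall x, C x <-> C1 x) \/ (forall x, C x <-> C2 x).

Definition spectral (X : top) : Prop :=
  (forall x y : pt X, x <> y -> exists U, opn U /\ ~ (U x <-> U y)) /\
  qcompact X (fun _ => True) /\
  (forall U V : pt X -> Prop, opn U -> qcompact X U -> opn V -> qcompact X V ->
      qcompact X (fun x => U x /\ V x)) /\
  (forall (U : pt X -> Prop) x, opn U -> U x ->
      exists V, opn V /\ qcompact X V /\ V x /\ forall y, V y -> U y) /\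
  (forall C : pt X -> Prop, closed X C -> (exists x, C x) -> irreducible X C ->
      exists x, forall y, C y <-> closure X (fun z => z = x) y).

Definition opens (X : top) := {U : pt X -> Prop | opn U}.
Definition oset {X : top} (U : opens X) : pt X -> Prop := proj1_sig U.

Definition opens_inter {X : top} (U V : opens X) : opens X :=
  exist _ (fun x => oset U x /\ oset V x) (opn_inter X _ _ (proj2_sig U) (proj2_sig V)).

Lemma opens_union_open (X : top) (A : opens X -> Prop) :
  opn (fun x => exists W, (exists U, A U /\ W = oset U) /\ W x).
Proof.
  apply opn_union. intros W [U [_ ->]]. exact (proj2_sig U).
Qed.

Definition opens_union {X : top} (A : opens X -> Prop) : opens X :=
  exist _ _ (opens_union_open X A).

Definition Lopen (X : top) : latdata :=
  LatData (opens X) (fun U V => forall x, oset U x -> oset V x)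
          opens_inter opens_union.

Definition lopen_map {X Y : top} (g : pt X -> pt Y) (Hg : continuous X Y g)
  (V : opens Y) : opens X :=
  exist _ (fun x => oset V (g x)) (Hg _ (proj2_sig V)).

Definition primes (L : latdata) := {p : lcar L | prime L p}.

Definition Dset (L : latdata) (a : lcar L) : primes L -> Prop :=
  fun p => ~ lle a (proj1_sig p).

Definition spec_open (L : latdata) (S : primes L -> Prop) : Prop :=
  exists a, forall p, S p <-> Dset L a p.

Section SpecTop.
Variables (L : latdata) (HL : ideal_lattice L).

Lemma join_top (b : lcar L) : ljoin b (ltop L) = ltop L.
Proof.
  apply (il_antisym _ HL).
  - apply (il_sup_least _ HL). intros x _. apply (il_sup_ub _ HL). exact I.
  - apply (il_sup_ub _ HL). right; reflexivity.
Qed.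

Lemma mul_le_l (a b : lcar L) : lle (lmul a b) a.
Proof.
  pose proof (il_distl _ HL a b (ltop L)) as E.
  rewrite join_top, (il_mul1r _ HL) in E.
  assert (H : lle (lmul a b) (ljoin (lmul a b) a)) by
    (apply (il_sup_ub _ HL); left; reflexivity).
  rewrite <- E in H. exact H.
Qed.

Lemma mul_le_r (a b : lcar L) : lle (lmul a b) b.
Proof.
  pose proof (il_distr _ HL a (ltop L) b) as E.
  rewrite join_top, (il_mul1l _ HL) in E.
  assert (H : lle (lmul a b) (ljoin (lmul a b) b)) by
    (apply (il_sup_ub _ HL); left; reflexivity).
  rewrite <- E in H. exact H.
Qed.

Lemma spec_full : spec_open L (fun _ => True).
Proof.
  exists (ltop L). intros [p [Hne Hp]]; unfold Dset; simpl; split; [|auto].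
  intros _ Hle. apply Hne. apply (il_antisym _ HL); [|exact Hle].
  apply (il_sup_ub _ HL). exact I.
Qed.

Lemma spec_inter (U V : primes L -> Prop) :
  spec_open L U -> spec_open L V -> spec_open L (fun x => U x /\ V x).
Proof.
  intros [a Ha] [b Hb]. exists (lmul a b). intros p. split.
  - intros [Up Vp] Hab. apply Ha in Up. apply Hb in Vp.
    pose proof (proj2 (proj2_sig p) a b Hab) as Hor.
    unfold Dset in *. destruct Hor; contradiction.
  - intros Hn. split; [apply Ha | apply Hb]; intro H; apply Hn;
      eapply (il_trans _ HL); [apply mul_le_l | exact H | apply mul_le_r | exact H].
Qed.

Lemma spec_union (F : (primes L -> Prop) -> Prop) :
  (forall U, F U -> spec_open L U) -> spec_open L (fun x => exists U, F U /\ U x).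
Proof.
  intros HF.
  exists (lsup (fun a => exists U, F U /\ forall p, U p <-> Dset L a p)).
  intros p. split.
  - intros [U [FU Up]] Hle. destruct (HF U FU) as [a Ha].
    apply (proj1 (Ha p) Up). eapply (il_trans _ HL); [|exact Hle].
    apply (il_sup_ub _ HL). exists U; split; assumption.
  - intros Hn. apply NNPP; intro Hno. apply Hn. apply (il_sup_least _ HL).
    intros a [U [FU Ha]]. apply NNPP; intro Hna. apply Hno.
    exists U; split; [exact FU | apply Ha; exact Hna].
Qed.

End SpecTop.

Definition Spec (L : latdata) (HL : ideal_lattice L) : top :=
  Top (primes L) (spec_open L) (spec_full L HL) (spec_inter L HL) (spec_union L HL).

Definition spec_map {L' L : latdata} (psi : lcar L' -> lcar L) (p : lcar L) : lcar L' :=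
  lsup (fun a => lle (psi a) p).

Definition phi_of {L : latdata} {X : top} (phi : lcar L -> pt X -> Prop) (x : pt X)
  : lcar L := lsup (fun c => compact L c /\ ~ phi c x).

Definition psi_of {L : latdata} {X : top} (f : pt X -> lcar L) (a : lcar L)
  : pt X -> Prop := fun x => ~ lle a (f x).

(* Main.v *)
Require Import Defs.
From Stdlib Require Import RelationClasses List Classical ClassicalEpsilon FunctionalExtensionality PropExtensionality ProofIrrelevance Arith Lia.
Import ListNotations.

Section Lat.
Context (L : latdata) (HL : ideal_lattice L).

Lemma le_refl (a : lcar L) : lle a a.
Proof. apply (il_refl _ HL). Qed.
Lemma le_trans (a b c : lcar L) : lle a b -> lle b c -> lle a c.
Proof. apply (il_trans _ HL). Qed.
#[local] Instance le_Tr : RelationClasses.Transitive (@lle L) := le_trans.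
Lemma le_anti (a b : lcar L) : lle a b -> lle b a -> a = b.
Proof. apply (il_antisym _ HL). Qed.
Lemma sup_ub (A : lcar L -> Prop) (a : lcar L) : A a -> lle a (lsup A).
Proof. apply (il_sup_ub _ HL). Qed.
Lemma sup_least (A : lcar L -> Prop) (b : lcar L) :
  (forall a, A a -> lle a b) -> lle (lsup A) b.
Proof. apply (il_sup_least _ HL). Qed.

Lemma sup_mono (A B : lcar L -> Prop) :
  (forall x, A x -> exists y, B y /\ lle x y) -> lle (lsup A) (lsup B).
Proof.
  intros H. apply sup_least; auto. intros a Aa. destruct (H a Aa) as [y [By Hy]].
  eapply le_trans; eauto. apply sup_ub; auto.
Qed.

Lemma le_top (a : lcar L) : lle a (ltop L).
Proof. apply sup_ub; auto. Qed.

Lemma join_l (a b : lcar L) : lle a (ljoin a b).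
Proof. apply sup_ub; auto. Qed.
Lemma join_r (a b : lcar L) : lle b (ljoin a b).
Proof. apply sup_ub; auto. Qed.
Lemma join_least (a b c : lcar L) :
  lle a c -> lle b c -> lle (ljoin a b) c.
Proof. intros; apply sup_least; auto. intros x [->| ->]; auto. Qed.

Lemma join_eq (a b : lcar L) : lle a b -> ljoin a b = b.
Proof. intros; apply le_anti; auto. apply join_least; auto. apply le_refl; auto. apply join_r; auto. Qed.

Lemma mul_mono_r (a b b' : lcar L) :
  lle b b' -> lle (lmul a b) (lmul a b').
Proof.
  intros H. rewrite <- (join_eq b b' H). rewrite (il_distl _ HL). apply join_l; auto.
Qed.
Lemma mul_mono_l (a a' b : lcar L) :
  lle a a' -> lle (lmul a b) (lmul a' b).
Proof.
  intros H. rewrite <- (join_eq a a' H). rewrite (il_distr _ HL). apply join_l; auto.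
Qed.
Lemma mul_mono (a a' b b' : lcar L) :
  lle a a' -> lle b b' -> lle (lmul a b) (lmul a' b').
Proof.
  intros. eapply le_trans; auto. apply mul_mono_l; eauto. apply mul_mono_r; auto.
Qed.

Lemma mul_join_le (m x y : lcar L) :
  lle (lmul (ljoin m x) (ljoin m y)) (ljoin m (lmul x y)).
Proof.
  rewrite (il_distr _ HL). apply join_least; auto.
  - eapply le_trans; auto. apply (mul_le_l L HL). apply join_l; auto.
  - rewrite (il_distl _ HL). apply join_least; auto.
    + eapply le_trans; auto. apply (mul_le_r L HL). apply join_l; auto.
    + apply join_r; auto.
Qed.

Lemma top_prime_not (p : lcar L) : prime L p -> ~ lle (ltop L) p.
Proof. intros [Hne _] H. apply Hne. apply le_anti; auto. apply le_top; auto. Qed.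

Fixpoint pw (L : latdata) (c : lcar L) (n : nat) : lcar L :=
  match n with 0 => ltop L | S n => lmul c (pw L c n) end.

Lemma pw_add (c : lcar L) i j : pw L c (i + j) = lmul (pw L c i) (pw L c j).
Proof.
  induction i; simpl. rewrite (il_mul1l _ HL); auto. rewrite IHi, (il_assoc _ HL); auto.
Qed.

Lemma pw_compact (c : lcar L) n : compact L c -> compact L (pw L c n).
Proof. intros Hc; induction n; simpl. apply (il_top_compact _ HL). apply (il_mul_compact _ HL); auto. Qed.

Lemma pw_prime (c : lcar L) n (p : lcar L) : prime L p ->
  lle (pw L c n) p -> lle c p \/ lle (ltop L) p.
Proof.
  intros Hp. induction n; simpl; auto. intros H.
  destruct (proj2 Hp _ _ H); auto.
Qed.

Lemma pw_le1 (c : lcar L) : lle (pw L c 1) c.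
Proof. simpl. rewrite (il_mul1r _ HL). apply le_refl; auto. Qed.

Lemma list_max (C : lcar L -> Prop) (d0 : lcar L) :
  C d0 -> (forall x y, C x -> C y -> lle x y \/ lle y x) ->
  forall l : list (lcar L), (forall x, In x l -> C x) ->
  exists z, C z /\ forall x, In x l -> lle x z.
Proof.
  intros H0 Hch. induction l as [|a l IH]; intros Hl.
  - exists d0; split; auto. intros x [].
  - destruct IH as [z [Cz Hz]]. intros; apply Hl; simpl; auto.
    destruct (Hch a z (Hl a (or_introl eq_refl)) Cz) as [H|H].
    + exists z; split; auto. intros x [<-|Hx]; auto.
    + exists a; split; auto. apply Hl; simpl; auto. intros x [<-|Hx]. apply le_refl; auto.
      eapply le_trans; eauto.
Qed.

Lemma compact_chain (C : lcar L -> Prop) (c : lcar L) :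
  compact L c -> (exists d, C d) -> (forall x y, C x -> C y -> lle x y \/ lle y x) ->
  lle c (lsup C) -> exists z, C z /\ lle c z.
Proof.
  intros Hc [d Cd] Hch H. destruct (Hc C H) as [l [Hl Hle]].
  destruct (list_max C d Cd Hch l Hl) as [z [Cz Hz]].
  exists z; split; auto. eapply le_trans; eauto. apply sup_least; auto.
Qed.

Inductive tower (L : latdata) (a0 : lcar L) (f : lcar L -> lcar L) : lcar L -> Prop :=
| tw_f : forall x, tower L a0 f x -> tower L a0 f (f x)
| tw_sup : forall C : lcar L -> Prop, (forall x, C x -> tower L a0 f x) ->
    (forall x y, C x -> C y -> lle x y \/ lle y x) ->
    tower L a0 f (lsup (fun x => x = a0 \/ C x)).

Section Tower.
Context (a0 : lcar L) (f : lcar L -> lcar L)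
  (Hinfl : forall x, tower L a0 f x -> lle x (f x)).

Lemma tw_a0 x : tower L a0 f x -> lle a0 x.
Proof.
  induction 1. etransitivity; eauto. apply sup_ub; auto.
Qed.

Definition ext x := forall y, tower L a0 f y -> lle y x -> y <> x -> lle (f y) x.

Lemma tw_cmp1 x : tower L a0 f x -> ext x -> forall y, tower L a0 f y -> lle y x \/ lle (f x) y.
Proof.
  intros Tx Ex y Ty. induction Ty as [z Tz IH | C HC IH Hch].
  - destruct IH as [H|H].
    + destruct (classic (z = x)) as [->|Hne]. right; apply le_refl; auto. left; apply Ex; auto.
    + right. etransitivity; [exact H | apply Hinfl; auto].
  - destruct (classic (exists c, C c /\ lle (f x) c)) as [[c [Cc Hc]]|Hn].
    + right. etransitivity; [exact Hc| apply sup_ub; right; auto].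
    + left. apply sup_least. intros w [->|Cw]. apply tw_a0; auto.
      destruct (IH w Cw) as [H|H]; auto. exfalso; apply Hn; eauto.
Qed.

Lemma tw_ext x : tower L a0 f x -> ext x.
Proof.
  intros Tx; induction Tx as [z Tz IH | C HC IH Hch]; intros y Ty Hyx Hne.
  - destruct (tw_cmp1 z Tz IH y Ty) as [H|H].
    + destruct (classic (y = z)) as [->|Hyz]. apply le_refl; auto.
      etransitivity; [apply IH; auto | apply Hinfl; auto].
    + exfalso; apply Hne; apply le_anti; auto.
  - destruct (classic (exists c, C c /\ lle y c)) as [[c [Cc Hyc]]|Hn].
    + destruct (classic (y = c)) as [->|Hyc'].
      * destruct (classic (exists c', C c' /\ lle (f c) c')) as [[c' [Cc' H]]|Hn'].
        -- etransitivity; [exact H | apply sup_ub; right; auto].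
        -- exfalso. apply Hne. apply le_anti; auto. apply sup_least. intros w [->|Cw].
           apply tw_a0; auto.
           destruct (tw_cmp1 c (HC c Cc) (IH c Cc) w (HC w Cw)) as [H|H]; auto.
           exfalso; apply Hn'; eauto.
      * etransitivity; [apply (IH c Cc); auto | apply sup_ub; right; auto].
    + exfalso. apply Hne. apply le_anti; auto. apply sup_least. intros w [->|Cw].
      apply tw_a0; auto.
      destruct (tw_cmp1 w (HC w Cw) (IH w Cw) y Ty) as [H|H].
      exfalso; apply Hn; eauto. etransitivity; [apply Hinfl; auto | exact H].
Qed.

Lemma tw_chain x y : tower L a0 f x -> tower L a0 f y -> lle x y \/ lle y x.
Proof.
  intros Tx Ty. destruct (tw_cmp1 x Tx (tw_ext x Tx) y Ty) as [H|H]; auto.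
  left. etransitivity; [apply Hinfl; auto|exact H].
Qed.
End Tower.

Lemma zorn (P : lcar L -> Prop) (a0 : lcar L) :
  P a0 ->
  (forall C, (forall x, C x -> P x) -> (forall x y, C x -> C y -> lle x y \/ lle y x) ->
     (exists x, C x) -> P (lsup C)) ->
  exists m, P m /\ lle a0 m /\ forall y, P y -> lle m y -> m = y.
Proof.
  intros H0 HC. apply NNPP; intro Hno.
  assert (Hex: forall x, exists y, (P x /\ lle a0 x) -> (P y /\ lle a0 y /\ lle x y /\ x <> y)).
  { intro x. destruct (classic (P x /\ lle a0 x)) as [Hx|Hx]; [|exists x; tauto].
    apply NNPP; intro H'. apply Hno. exists x. split; [tauto|split;[tauto|]]. intros y Py Hxy.
    apply NNPP; intro Hne. apply H'. exists y. intros _. repeat split; auto.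
    etransitivity; [apply Hx|exact Hxy]. }
  set (f := fun x => proj1_sig (constructive_indefinite_description _ (Hex x))).
  assert (Hf : forall x, P x /\ lle a0 x -> P (f x) /\ lle a0 (f x) /\ lle x (f x) /\ x <> f x).
  { intros x Hx. exact (proj2_sig (constructive_indefinite_description _ (Hex x)) Hx). }
  assert (HT : forall x, tower L a0 f x -> P x /\ lle a0 x).
  { induction 1 as [x Tx IH | C HCt IH Hch].
    - destruct (Hf x IH); tauto.
    - split; [|apply sup_ub; auto].
      apply HC.
      + intros w [->|Cw]; auto. apply IH; auto.
      + intros x y [->|Cx] [->|Cy]; auto.
        left; apply le_refl; auto. left; apply IH; auto. right; apply IH; auto.
      + eauto. }
  assert (Hinfl : forall x, tower L a0 f x -> lle x (f x)) by (intros x Tx; apply Hf, HT, Tx).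
  set (m := lsup (fun x => x = a0 \/ tower L a0 f x)).
  assert (Tm : tower L a0 f m).
  { apply tw_sup; auto. intros; eapply tw_chain; eauto. }
  assert (Tfm : tower L a0 f (f m)) by (apply tw_f; auto).
  destruct (Hf m (HT m Tm)) as [_ [_ [Hle Hne]]].
  apply Hne. apply le_anti; auto. apply sup_ub; auto.
Qed.

Lemma prime_exists (a c : lcar L) :
  compact L c -> (forall n, ~ lle (pw L c n) a) ->
  exists p, prime L p /\ lle a p /\ forall n, ~ lle (pw L c n) p.
Proof.
  intros Hc Ha.
  destruct (zorn (fun x => forall n, ~ lle (pw L c n) x) a Ha) as [m [Pm [Ham Hmax]]].
  { intros C HCP Hch Hne n Hn.
    destruct (compact_chain C (pw L c n) (pw_compact c n Hc) Hne Hch Hn) as [z [Cz Hz]].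
    eapply HCP; eauto. }
  exists m; split; [|split; auto].
  split.
  - intro E. apply (Pm 0). simpl. rewrite E. apply le_refl; auto.
  - intros x y Hxy. apply NNPP; intros Hn. apply not_or_and in Hn as [Hx Hy].
    assert (Ex : exists i, lle (pw L c i) (ljoin m x)).
    { apply NNPP; intro H. assert (E : m = ljoin m x).
      { apply Hmax. intros n Hn'. apply H; eauto. apply join_l; auto. }
      apply Hx. rewrite E. apply join_r; auto. }
    assert (Ey : exists i, lle (pw L c i) (ljoin m y)).
    { apply NNPP; intro H. assert (E : m = ljoin m y).
      { apply Hmax. intros n Hn'. apply H; eauto. apply join_l; auto. }
      apply Hy. rewrite E. apply join_r; auto. }
    destruct Ex as [i Hi]; destruct Ey as [j Hj].
    apply (Pm (i + j)). rewrite pw_add; auto.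
    etransitivity; [apply mul_mono; eauto|].
    etransitivity; [apply mul_join_le; auto|]. apply join_least; auto. apply le_refl; auto.
Qed.

End Lat.

Lemma list_choose {X Y : Type} (R : X -> Y -> Prop) (l : list X) :
  (forall x, In x l -> exists y, R x y) ->
  exists l' : list Y, (forall y, In y l' -> exists x, In x l /\ R x y) /\
                      (forall x, In x l -> exists y, In y l' /\ R x y).
Proof.
  induction l as [|a l IH]; intros H.
  - exists nil; split; intros ? [].
  - destruct (H a (or_introl eq_refl)) as [ya Ha].
    destruct IH as [l' [H1 H2]]. intros; apply H; simpl; auto.
    exists (ya :: l'); split.
    + intros y [<-|Hy]. exists a; simpl; auto. destruct (H1 y Hy) as [x [? ?]]; exists x; simpl; auto.
    + intros x [<-|Hx]. exists ya; simpl; auto. destruct (H2 x Hx) as [y [? ?]]; exists y; simpl; auto.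
Qed.

Lemma sig_eq {A : Type} {P : A -> Prop} (x y : {a | P a}) : proj1_sig x = proj1_sig y -> x = y.
Proof. destruct x, y; simpl; intros ->; f_equal; apply proof_irrelevance. Qed.

Lemma qcompact_ext (X : top) (K K' : pt X -> Prop) :
  (forall x, K x <-> K' x) -> qcompact X K -> qcompact X K'.
Proof.
  intros E H F HF Hc. destruct (H F HF) as [l [H1 H2]].
  intros x Kx; apply Hc, E, Kx.
  exists l; split; auto. intros x Kx; apply H2, E, Kx.
Qed.

Section Lat2.
Context (L : latdata) (HL : ideal_lattice L).
#[local] Instance le_Tr2 : RelationClasses.Transitive (@lle L) := le_trans L HL.
Let le_refl := le_refl L HL.
Let le_anti := le_anti L HL.
Let sup_ub := sup_ub L HL.
Let sup_least := sup_least L HL.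
Let sup_mono := sup_mono L HL.
Let le_top := le_top L HL.

Lemma fin_compact (l : list (lcar L)) : (forall x, In x l -> compact L x) ->
  compact L (lsup (fun x => In x l)).
Proof.
  induction l as [|a l IH]; intros Hl A HA.
  - exists nil; split. intros ? []. apply le_refl.
  - destruct (Hl a (or_introl eq_refl) A) as [la [Hla Ha]].
    etransitivity; [|exact HA]. apply sup_ub; simpl; auto.
    destruct (IH (fun x H => Hl x (or_intror H)) A) as [l' [Hl' Hle]].
    etransitivity; [|exact HA]. apply sup_mono. intros x Hx; exists x; split; [simpl; auto|apply le_refl].
    exists (la ++ l'); split.
    + intros x Hx. apply in_app_or in Hx as [?|?]; auto.
    + apply sup_least. intros x [<-|Hx].
      * etransitivity; [exact Ha|]. apply sup_mono. intros y Hy; exists y; split; [apply in_or_app; auto|apply le_refl].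
      * etransitivity; [|etransitivity; [exact Hle|]]. apply sup_ub; auto.
        apply sup_mono. intros y Hy; exists y; split; [apply in_or_app; auto|apply le_refl].
Qed.

Lemma D_sup (A : lcar L -> Prop) p : Dset L (lsup A) p <-> exists a, A a /\ Dset L a p.
Proof.
  unfold Dset. split.
  - intros H. apply NNPP; intro Hn. apply H. apply sup_least. intros a Aa.
    apply NNPP; intro. apply Hn; eauto.
  - intros [a [Aa Ha]] H. apply Ha. etransitivity; [|exact H]. apply sup_ub; auto.
Qed.

Lemma D_mul a b p : Dset L (lmul a b) p <-> Dset L a p /\ Dset L b p.
Proof.
  unfold Dset. split.
  - intros H; split; intro H'; apply H; (etransitivity; [|exact H']);
      [apply (mul_le_l L HL)|apply (mul_le_r L HL)].
  - intros [Ha Hb] H. destruct (proj2 (proj2_sig p) a b H); auto.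
Qed.

Lemma D_top p : Dset L (ltop L) p.
Proof. unfold Dset. apply top_prime_not; auto. apply (proj2_sig p). Qed.

Lemma D_le a b p : lle a b -> Dset L a p -> Dset L b p.
Proof. unfold Dset; intros H Ha Hb; apply Ha; etransitivity; eauto. Qed.

Lemma D_qcompact (c : lcar L) : compact L c -> qcompact (Spec L HL) (Dset L c).
Proof.
  intros Hc F HF Hcov.
  set (A := fun a => exists U, F U /\ forall p, U p <-> Dset L a p).
  assert (Hn : exists n, lle (pw L c n) (lsup A)).
  { apply NNPP; intro H.
    destruct (prime_exists L HL (lsup A) c Hc (fun n h => H (ex_intro _ n h))) as [p [Hp [Hle Hn]]].
    set (pp := exist _ p Hp : primes L).
    destruct (Hcov pp) as [U [FU Up]].
    { intro H'. apply (Hn 1). etransitivity; [apply pw_le1; auto|exact H']. }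
    destruct (HF U FU) as [a Ha]. apply Ha in Up. apply Up. simpl.
    etransitivity; [|exact Hle]. apply sup_ub. exists U; split; auto. }
  destruct Hn as [n Hn]. destruct (pw_compact L HL c n Hc A Hn) as [l [Hl Hle]].
  destruct (list_choose (fun a U => F U /\ forall p, U p <-> Dset L a p) l) as [lU [H1 H2]].
  { intros a Ha; apply Hl, Ha. }
  exists lU; split.
  - intros U HU. destruct (H1 U HU) as [x [_ [? _]]]; auto.
  - intros p Hp.
    assert (Ha : exists a, In a l /\ Dset L a p).
    { apply NNPP; intro H. apply Hp.
      assert (H' : lle (pw L c n) (proj1_sig p)).
      { etransitivity; [exact Hle|]. apply sup_least. intros a Ha. apply NNPP; intro.
        apply H; eauto. }
      destruct (pw_prime L c n (proj1_sig p) (proj2_sig p) H') as [?|?]; auto.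
      exfalso; eapply top_prime_not; eauto. apply (proj2_sig p). }
    destruct Ha as [a [Ha Da]]. destruct (H2 a Ha) as [U [HU [_ HUa]]].
    exists U; split; auto. apply HUa; auto.
Qed.

Lemma qc_open_compact (U : primes L -> Prop) : spec_open L U -> qcompact (Spec L HL) U ->
  exists c, compact L c /\ forall p, U p <-> Dset L c p.
Proof.
  intros [a Ha] Hq.
  set (F := fun W : primes L -> Prop => exists c, compact L c /\ lle c a /\ forall p, W p <-> Dset L c p).
  destruct (Hq F) as [lW [HW1 HW2]].
  - intros W [c [_ [_ Hc]]]. exists c; auto.
  - intros p Up. apply Ha in Up.
    destruct (il_algebraic _ HL a) as [B [HB EB]].
    rewrite EB in Up. apply D_sup in Up as [c [Bc Dc]].
    exists (Dset L c); split; auto. exists c; repeat split; auto.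
    rewrite EB; apply sup_ub; auto.
  - destruct (list_choose (fun W c => compact L c /\ lle c a /\ forall p, W p <-> Dset L c p) lW)
      as [lc [H1 H2]].
    { intros W HW. apply HW1, HW. }
    exists (lsup (fun x => In x lc)); split.
    + apply fin_compact. intros c Hc. destruct (H1 c Hc) as [? [_ [? _]]]; auto.
    + intros p; split.
      * intros Up. destruct (HW2 p Up) as [W [InW Wp]]. destruct (H2 W InW) as [c [Inc [_ [_ Hc]]]].
        apply D_sup. exists c; split; auto. apply Hc; auto.
      * intros Dp. apply Ha. eapply D_le; [|exact Dp]. apply sup_least.
        intros c Hc. destruct (H1 c Hc) as [? [_ [_ [? _]]]]; auto.
Qed.

Lemma closed_V (C : primes L -> Prop) : closed (Spec L HL) C ->
  exists a, forall p, C p <-> lle a (proj1_sig p).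
Proof.
  intros [a Ha]. exists a. intros p. specialize (Ha p). unfold Dset in Ha.
  split; intro H. apply NNPP; intro H'. apply Ha in H'; auto.
  apply NNPP; intro H'. apply Ha in H'; auto.
Qed.

Lemma V_closed a : closed (Spec L HL) (fun p => lle a (proj1_sig p)).
Proof. exists a. intros p; unfold Dset; tauto. Qed.

Lemma spec_spectral : spectral (Spec L HL).
Proof.
  split; [|split; [|split; [|split]]].
  - intros p q Hpq.
    destruct (classic (lle (proj1_sig p) (proj1_sig q))) as [H1|H1].
    + destruct (classic (lle (proj1_sig q) (proj1_sig p))) as [H2|H2].
      * exfalso; apply Hpq, sig_eq, le_anti; auto.
      * exists (Dset L (proj1_sig q)); split. exists (proj1_sig q); tauto.
        unfold Dset. intros [H _]. apply (H H2). apply le_refl.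
    + exists (Dset L (proj1_sig p)); split. exists (proj1_sig p); tauto.
      unfold Dset. intros [_ H]. apply (H H1). apply le_refl.
  - eapply qcompact_ext; [|apply D_qcompact, (il_top_compact _ HL)].
    intros x; split; auto. intros _; apply D_top.
  - intros U V HU QU HV QV.
    destruct (qc_open_compact U HU QU) as [c [Hc Ec]].
    destruct (qc_open_compact V HV QV) as [d [Hd Ed]].
    eapply qcompact_ext; [|apply (D_qcompact (lmul c d)), (il_mul_compact _ HL); auto].
    intros p. rewrite D_mul, Ec, Ed. tauto.
  - intros U p [a Ha] Up. apply Ha in Up.
    destruct (il_algebraic _ HL a) as [B [HB EB]].
    rewrite EB in Up. apply D_sup in Up as [c [Bc Dc]].
    exists (Dset L c); split; [exists c; tauto|]. split; [apply D_qcompact; auto|].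
    split; auto. intros y Hy. apply Ha. rewrite EB. apply D_sup; eauto.
  - intros C HC [p0 Cp0] Hirr.
    destruct (closed_V C HC) as [a Ha].
    set (q := lsup (fun b => forall p : primes L, lle a (proj1_sig p) -> lle b (proj1_sig p))).
    assert (Hq_le : forall p : primes L, lle a (proj1_sig p) -> lle q (proj1_sig p)).
    { intros p Hp. apply sup_least. intros b Hb; auto. }
    assert (Haq : lle a q) by (apply sup_ub; auto).
    assert (Hq : prime L q).
    { split.
      - intros E. apply Ha in Cp0. apply (top_prime_not L HL _ (proj2_sig p0)).
        rewrite <- E. apply Hq_le; auto.
      - intros b c Hbc.
        destruct (Hirr (fun p => lle (ljoin a b) (proj1_sig p)) (fun p => lle (ljoin a c) (proj1_sig p)))
          as [E|E]; try apply V_closed.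
        + intros p. rewrite Ha. split.
          * intros Hp. assert (H' : lle (lmul b c) (proj1_sig p)) by (etransitivity; eauto).
            destruct (proj2 (proj2_sig p) b c H'); [left|right]; apply join_least; auto.
          * intros [H|H]; (etransitivity; [|exact H]); apply join_l; auto.
        + left. apply sup_ub. intros p Hp. apply Ha, E in Hp.
          etransitivity; [|exact Hp]. apply join_r; auto.
        + right. apply sup_ub. intros p Hp. apply Ha, E in Hp.
          etransitivity; [|exact Hp]. apply join_r; auto. }
    exists (exist _ q Hq). intros y. rewrite Ha. split.
    + intros Hy C' HC' HC'x. destruct (closed_V C' HC') as [a' Ha'].
      apply Ha'. assert (Cx := HC'x _ eq_refl). apply Ha' in Cx. simpl in Cx.
      etransitivity; [exact Cx|]. apply Hq_le; auto.
    + intros Hcl. apply (Hcl (fun p => lle a (proj1_sig p))). apply V_closed.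
      intros z ->; simpl; auto.
Qed.

End Lat2.

Section TopS.
Context (X : top).

Lemma opens_ext (U V : opens X) : (forall x, oset U x <-> oset V x) -> U = V.
Proof.
  intros H. apply sig_eq. apply functional_extensionality. intros x.
  apply propositional_extensionality. apply H.
Qed.

Lemma osup (A : opens X -> Prop) x : oset (@lsup (Lopen X) A) x <-> exists U, A U /\ oset U x.
Proof.
  simpl. unfold opens_union, oset at 1; simpl. split.
  - intros [W [[U [AU ->]] Wx]]; eauto.
  - intros [U [AU Ux]]. exists (oset U); split; eauto.
Qed.

Lemma ojoin (U V : opens X) x : oset (@ljoin (Lopen X) U V) x <-> oset U x \/ oset V x.
Proof.
  unfold ljoin. rewrite osup. split.
  - intros [W [[->| ->] Wx]]; auto.
  - intros [H|H]; eauto.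
Qed.

Lemma omul (U V : opens X) x : oset (@lmul (Lopen X) U V) x <-> oset U x /\ oset V x.
Proof. simpl. unfold opens_inter, oset; simpl. tauto. Qed.

Lemma otop x : oset (ltop (Lopen X)) x.
Proof. unfold ltop. apply osup. exists (exist _ _ (opn_full X)). split; simpl; auto. Qed.

Lemma qc_compact (V : opens X) : qcompact X (oset V) -> compact (Lopen X) V.
Proof.
  intros Hq A HA.
  destruct (Hq (fun W => exists U, A U /\ W = oset U)) as [lW [H1 H2]].
  - intros W [U [_ ->]]. apply (proj2_sig U).
  - intros x Vx. apply HA, osup in Vx. destruct Vx as [U [AU Ux]]. eauto.
  - destruct (list_choose (fun W U => A U /\ W = oset U) lW) as [lU [G1 G2]].
    { intros W HW. apply H1, HW. }
    exists lU; split.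
    + intros U HU. destruct (G1 U HU) as [? [_ [? _]]]; auto.
    + intros x Vx. apply osup. destruct (H2 x Vx) as [W [HW Wx]].
      destruct (G2 W HW) as [U [HU [_ ->]]]. eauto.
Qed.

Lemma compact_qc (V : opens X) : compact (Lopen X) V -> qcompact X (oset V).
Proof.
  intros Hc F HF Hcov.
  destruct (Hc (fun U : opens X => F (oset U))) as [l [H1 H2]].
  - intros x Vx. apply osup. destruct (Hcov x Vx) as [U [FU Ux]].
    exists (exist _ U (HF U FU)). simpl; auto.
  - exists (map oset l); split.
    + intros U HU. apply in_map_iff in HU as [W [<- HW]]. apply H1; auto.
    + intros x Vx. apply H2, osup in Vx. destruct Vx as [U [HU Ux]].
      exists (oset U); split; auto. apply in_map; auto.
Qed.

Lemma Lopen_il : spectral X -> ideal_lattice (Lopen X).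
Proof.
  intros HX. destruct HX as [HT0 [Hqc [Hint [Hbasis Hgen]]]].
  constructor.
  - simpl; auto.
  - simpl; auto.
  - intros U V H1 H2. apply opens_ext; split; auto.
  - intros A U AU x Ux. apply osup; eauto.
  - intros A U H x Hx. apply osup in Hx as [V [AV Vx]]. apply (H V AV); auto.
  - intros U V W. apply opens_ext. intros x. rewrite !omul. tauto.
  - intros U. exists (fun V : opens X => compact (Lopen X) V /\ forall x, oset V x -> oset U x).
    split. intros c [? _]; auto.
    apply opens_ext. intros x. rewrite osup. split.
    + intros Ux. destruct (Hbasis (oset U) x (proj2_sig U) Ux) as [V [HV [QV [Vx HVU]]]].
      exists (exist _ V HV). simpl. split; auto. split; auto. apply qc_compact; auto.
    + intros [V [[_ HV] Vx]]; auto.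
  - intros U V W. apply opens_ext. intros x. rewrite omul, !ojoin, !omul. tauto.
  - intros U V W. apply opens_ext. intros x. rewrite omul, !ojoin, !omul. tauto.
  - apply qc_compact. eapply qcompact_ext; [|exact Hqc]. intros; split; auto. intros; apply otop.
  - intros U. apply opens_ext. intros x. rewrite omul. pose proof (otop x). tauto.
  - intros U. apply opens_ext. intros x. rewrite omul. pose proof (otop x). tauto.
  - intros U V HU HV. apply qc_compact. apply compact_qc in HU. apply compact_qc in HV.
    apply (Hint (oset U) (oset V) (proj2_sig U) HU (proj2_sig V) HV).
Qed.
End TopS.

Lemma opn_ext (X : top) (U V : pt X -> Prop) : (forall x, U x <-> V x) -> opn U -> opn V.
Proof.
  intros H HU. replace V with U; auto. apply functional_extensionality; intros x.
  apply propositional_extensionality; apply H.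
Qed.

Lemma pred_ext {A : Type} (P Q : A -> Prop) : (forall x, P x <-> Q x) -> P = Q.
Proof. intros H. apply functional_extensionality; intros x. apply propositional_extensionality; apply H. Qed.

Lemma hom_mono (L L' : latdata) (HL : ideal_lattice L) (HL' : ideal_lattice L')
  (psi : lcar L -> lcar L') : is_hom L L' psi -> forall a b, lle a b -> lle (psi a) (psi b).
Proof.
  intros [Hs _] a b Hab. rewrite <- (join_eq L HL a b Hab). unfold ljoin. rewrite Hs.
  apply sup_ub; auto. exists a; auto.
Qed.

Lemma hom_comp (L1 L2 L3 : latdata) (f : lcar L1 -> lcar L2) (g : lcar L2 -> lcar L3) :
  is_hom L1 L2 f -> is_hom L2 L3 g -> is_hom L1 L3 (fun a => g (f a)).
Proof.
  intros [Fs [Ft Fm]] [Gs [Gt Gm]]. split; [|split].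
  - intros A. rewrite Fs, Gs. f_equal. apply pred_ext. intros z; split.
    + intros [y [[x [Ax ->]] ->]]; eauto.
    + intros [x [Ax ->]]; eauto.
  - rewrite Ft; auto.
  - intros a b; rewrite Fm, Gm; auto.
Qed.

Lemma inv_hom (L L' : latdata) (phi : lcar L -> lcar L') (psi : lcar L' -> lcar L) :
  is_hom L L' phi -> (forall a, psi (phi a) = a) -> (forall U, phi (psi U) = U) -> is_hom L' L psi.
Proof.
  intros [Hs [Ht Hm]] H1 H2.
  assert (inj : forall a b, phi a = phi b -> a = b).
  { intros a b E. rewrite <- (H1 a), <- (H1 b), E; auto. }
  split; [|split].
  - intros A. apply inj. rewrite H2, Hs. f_equal. apply pred_ext. intros z; split.
    + intros Az. exists (psi z); split; [eauto|rewrite H2; auto].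
    + intros [y [[x [Ax ->]] ->]]. rewrite H2; auto.
  - rewrite <- Ht, H1; auto.
  - intros a b. apply inj. rewrite Hm, !H2; auto.
Qed.

Section SpecMap.
Context (L L' : latdata) (HL : ideal_lattice L) (HL' : ideal_lattice L') (psi : lcar L' -> lcar L)
  (Hpsi : is_hom L' L psi).

Lemma spec_adj (p : lcar L) (a : lcar L') : lle (psi a) p <-> lle a (spec_map psi p).
Proof.
  split; intros H.
  - apply sup_ub; auto.
  - eapply le_trans; auto. apply (hom_mono L' L HL' HL psi Hpsi _ _ H).
    unfold spec_map. rewrite (proj1 Hpsi). apply sup_least; auto.
    intros y [x [Hx ->]]; auto.
Qed.

Lemma spec_map_prime p : prime L p -> prime L' (spec_map psi p).
Proof.
  intros Hp. split.
  - intros E. apply (top_prime_not L HL p Hp). rewrite <- (proj1 (proj2 Hpsi)).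
    apply spec_adj. rewrite E. apply le_refl; auto.
  - intros a b Hab. apply spec_adj in Hab. rewrite (proj2 (proj2 Hpsi)) in Hab.
    destruct (proj2 Hp _ _ Hab); [left|right]; apply spec_adj; auto.
Qed.

Lemma spec_map_cont : continuous (Spec L HL) (Spec L' HL')
  (fun p => exist _ (spec_map psi (proj1_sig p)) (spec_map_prime _ (proj2_sig p))).
Proof.
  intros V [a Ha]. exists (psi a). intros p. rewrite Ha. unfold Dset; simpl.
  rewrite spec_adj. tauto.
Qed.
End SpecMap.

Lemma spec_map_id (L : latdata) (HL : ideal_lattice L) (p : lcar L) : spec_map (fun a : lcar L => a) p = p.
Proof.
  apply le_anti; auto. apply sup_least; auto. apply sup_ub; auto. apply le_refl; auto.
Qed.

Lemma le_ext (L : latdata) (HL : ideal_lattice L) (u v : lcar L) :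
  (forall a, lle a u <-> lle a v) -> u = v.
Proof.
  intros H. apply le_anti; auto. apply H, le_refl; auto. apply H, le_refl; auto.
Qed.

Lemma spec_map_comp (L1 L2 L3 : latdata) (H1 : ideal_lattice L1) (H2 : ideal_lattice L2) (H3 : ideal_lattice L3)
  (psi1 : lcar L1 -> lcar L2) (psi2 : lcar L2 -> lcar L3) :
  is_hom L1 L2 psi1 -> is_hom L2 L3 psi2 -> forall p,
  spec_map (fun a => psi2 (psi1 a)) p = spec_map psi1 (spec_map psi2 p).
Proof.
  intros K1 K2 p. apply le_ext; auto. intros a.
  rewrite <- (spec_adj L3 L1 H3 H1 _ (hom_comp _ _ _ _ _ K1 K2) p a).
  rewrite <- (spec_adj L2 L1 H2 H1 _ K1 (spec_map psi2 p) a).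
  rewrite <- (spec_adj L3 L2 H3 H2 _ K2 p (psi1 a)). tauto.
Qed.

Lemma lopen_hom (X Y : top) (g : pt X -> pt Y) (Hg : continuous X Y g) :
  is_hom (Lopen Y) (Lopen X) (lopen_map g Hg).
Proof.
  split; [|split].
  - intros A. apply opens_ext. intros x. rewrite osup. unfold lopen_map, oset at 1; simpl.
    split.
    + intros [W [[U [AU ->]] Ux]]. exists (lopen_map g Hg U); split; [exists U; split; auto| exact Ux].
    + intros [U [[V [AV ->]] Ux]]. exists (oset V); split; eauto.
  - apply opens_ext. intros x. unfold lopen_map, oset at 1; simpl. fold (oset (ltop (Lopen Y)) (g x)).
    pose proof (otop X x); pose proof (otop Y (g x)); tauto.
  - intros a b. apply opens_ext. intros x. rewrite omul. reflexivity.
Qed.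

Section Adj.
Context (L : latdata) (HL : ideal_lattice L) (X : top) (HX : spectral X).
#[local] Instance le_Tr3 : RelationClasses.Transitive (@lle L) := le_trans L HL.

Lemma phi_of_char (phi : lcar L -> lcar (Lopen X)) : is_hom L (Lopen X) phi ->
  forall x a, lle a (phi_of (fun b => oset (phi b)) x) <-> ~ oset (phi a) x.
Proof.
  intros Hphi x.
  assert (Hc : forall c, compact L c -> (lle c (phi_of (fun b => oset (phi b)) x) <-> ~ oset (phi c) x)).
  { intros c Hc; split.
    - intros H. destruct (Hc _ H) as [l [Hl Hle]].
      intros Hx. apply (hom_mono L (Lopen X) HL (Lopen_il X HX) phi Hphi _ _ Hle) in Hx.
      rewrite (proj1 Hphi) in Hx. apply osup in Hx as [U [[y [Hy ->]] Hx]].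
      destruct (Hl y Hy) as [_ Hn]; auto.
    - intros H. apply sup_ub; auto. }
  intros a. destruct (il_algebraic _ HL a) as [B [HB ->]]. rewrite (proj1 Hphi). split.
  - intros H Hx. apply osup in Hx as [U [[y [By ->]] Hx]].
    apply (Hc y (HB y By)); auto. etransitivity; [|exact H]. apply sup_ub; auto.
  - intros H. apply sup_least; auto. intros y By. apply Hc; auto. intro Hy. apply H, osup.
    exists (phi y); split; eauto.
Qed.

Lemma adj_a (phi : lcar L -> lcar (Lopen X)) : is_hom L (Lopen X) phi ->
  exists H : forall x, prime L (phi_of (fun a => oset (phi a)) x),
    continuous X (Spec L HL) (fun x => exist _ _ (H x)).
Proof.
  intros Hphi.
  assert (H : forall x, prime L (phi_of (fun a => oset (phi a)) x)).
  { intros x. split.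
    - intros E. assert (H := proj1 (phi_of_char phi Hphi x (ltop L))). rewrite E in H.
      apply H. apply le_refl; auto. rewrite (proj1 (proj2 Hphi)). apply otop.
    - intros a b Hab. rewrite !phi_of_char in *; auto. rewrite (proj2 (proj2 Hphi)), omul in Hab.
      apply NNPP; intro Hn; apply Hab; split; apply NNPP; intro; apply Hn; auto. }
  exists H. intros V [a Ha]. apply (opn_ext X (oset (phi a))); [|apply (proj2_sig (phi a))].
  intros x. rewrite Ha. unfold Dset; simpl. rewrite phi_of_char; auto. split; auto. intros h; apply NNPP; auto.
Qed.

Lemma adj_b (f : pt X -> pt (Spec L HL)) : continuous X (Spec L HL) f ->
  exists H : forall a, opn (psi_of (fun x => proj1_sig (f x)) a),
    is_hom L (Lopen X) (fun a => exist _ _ (H a)).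
Proof.
  intros Hf.
  assert (H : forall a, opn (psi_of (fun x => proj1_sig (f x)) a)).
  { intros a. exact (Hf (Dset L a) (ex_intro _ a (fun p => iff_refl _))). }
  exists H. split; [|split].
  - intros A. apply opens_ext. intros x. rewrite osup. unfold oset at 1; simpl.
    unfold psi_of. fold (Dset L (lsup A) (f x)). rewrite (D_sup L HL). split.
    + intros [a [Aa Da]]. eexists; split; [exists a; split; eauto|]. exact Da.
    + intros [U [[a [Aa ->]] Ux]]. exists a; split; auto.
  - apply opens_ext. intros x. unfold oset at 1; simpl. unfold psi_of.
    fold (Dset L (ltop L) (f x)). pose proof (D_top L HL (f x)). pose proof (otop X x). tauto.
  - intros a b. apply opens_ext. intros x. rewrite omul. unfold oset; simpl. unfold psi_of.
    fold (Dset L (lmul a b) (f x)). fold (Dset L a (f x)). fold (Dset L b (f x)). apply (D_mul L HL).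
Qed.

Lemma adj_c (phi : lcar L -> lcar (Lopen X)) : is_hom L (Lopen X) phi ->
  forall a, psi_of (phi_of (fun b => oset (phi b))) a = oset (phi a).
Proof.
  intros Hphi a. apply pred_ext. intros x. unfold psi_of. rewrite phi_of_char; auto.
  split; auto. intros h; apply NNPP; auto.
Qed.

Lemma adj_d (f : pt X -> pt (Spec L HL)) :
  forall x, phi_of (psi_of (fun y => proj1_sig (f y))) x = proj1_sig (f x).
Proof.
  intros x. unfold phi_of, psi_of. destruct (il_algebraic _ HL (proj1_sig (f x))) as [B [HB EB]].
  apply le_anti; auto.
  - apply sup_least; auto. intros c [_ Hc]. apply NNPP; auto.
  - rewrite EB at 1. apply sup_least; auto. intros c Bc. apply sup_ub; auto. split; auto.
    intros Hn; apply Hn. rewrite EB. apply sup_ub; auto.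
Qed.

End Adj.

Lemma adj_e (L : latdata) (HL : ideal_lattice L) (X : top) (HX : spectral X) (L' : latdata) (HL' : ideal_lattice L') (psi : lcar L' -> lcar L) :
  is_hom L' L psi -> forall phi : lcar L -> lcar (Lopen X), is_hom L (Lopen X) phi ->
  forall x, phi_of (fun a' => oset (phi (psi a'))) x = spec_map psi (phi_of (fun a => oset (phi a)) x).
Proof.
  intros Hpsi phi Hphi x. apply le_ext; auto. intros a.
  rewrite <- (spec_adj L L' HL HL' psi Hpsi).
  rewrite (phi_of_char L HL X HX phi Hphi).
  pose proof (phi_of_char L' HL' X HX (fun a => phi (psi a)) (hom_comp _ _ _ _ _ Hpsi Hphi) x a) as E.
  rewrite E. tauto.
Qed.

Lemma faithful (X Y : top) (HY : spectral Y) (f g : pt X -> pt Y)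
  (Hf : continuous X Y f) (Hg : continuous X Y g) :
  (forall V, lopen_map f Hf V = lopen_map g Hg V) -> forall x, f x = g x.
Proof.
  intros H x. apply NNPP; intro Hne. destruct HY as [HT0 _].
  destruct (HT0 _ _ Hne) as [U [HU Hn]]. apply Hn.
  pose proof (f_equal oset (H (exist _ U HU))) as E. unfold lopen_map, oset in E; simpl in E.
  rewrite (equal_f E x). tauto.
Qed.

Lemma full (X Y : top) (HX : spectral X) (HY : spectral Y)
  (phi : lcar (Lopen Y) -> lcar (Lopen X)) : is_hom (Lopen Y) (Lopen X) phi ->
  exists (f : pt X -> pt Y) (Hf : continuous X Y f), forall V, phi V = lopen_map f Hf V.
Proof.
  intros Hphi.
  assert (HLX := Lopen_il X HX). assert (HLY := Lopen_il Y HY).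
  set (W := fun x => @lsup (Lopen Y) (fun V => ~ oset (phi V) x)).
  assert (HW : forall x V, lle V (W x) <-> ~ oset (phi V) x).
  { intros x V; split.
    - intros H Hx. apply (hom_mono _ _ HLY HLX phi Hphi _ _ H) in Hx.
      unfold W in Hx. rewrite (proj1 Hphi) in Hx. apply osup in Hx as [U [[V' [HV' ->]] Hx]]. auto.
    - intros H. apply sup_ub; auto. }
  assert (Hgen : forall x, exists y, forall z, ~ oset (W x) z <-> closure Y (fun w => w = y) z).
  { intros x. destruct HY as [_ [_ [_ [_ Hg]]]]. apply Hg.
    - apply (opn_ext Y (oset (W x))); [|apply (proj2_sig (W x))]. intros z; split; auto.
      intros h; apply NNPP; auto.
    - apply NNPP; intro Hn. apply (proj1 (HW x (ltop (Lopen Y)))).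
      + intros z _. apply NNPP; intro; apply Hn; eauto.
      + rewrite (proj1 (proj2 Hphi)). apply otop.
    - intros C1 C2 HC1 HC2 E.
      set (U1 := exist _ (fun z => ~ C1 z) HC1 : opens Y). set (U2 := exist _ (fun z => ~ C2 z) HC2 : opens Y).
      assert (H12 : lle (@lmul (Lopen Y) U1 U2) (W x)).
      { intros z Hz. rewrite omul in Hz. destruct Hz as [H1 H2]. simpl in H1, H2.
        apply NNPP; intro Hn. apply E in Hn as [?|?]; auto. }
      apply HW in H12. rewrite (proj2 (proj2 Hphi)), omul in H12.
      destruct (classic (oset (phi U1) x)) as [Hx1|Hx1].
      + right. assert (H2 : @lle (Lopen Y) U2 (W x)) by (apply HW; tauto).
        intros z; split. intros Cz; apply NNPP; intro Hn; apply Cz, (H2 z), Hn.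
        intros Cz; apply E; auto.
      + left. assert (H1 : @lle (Lopen Y) U1 (W x)) by (apply HW; tauto).
        intros z; split. intros Cz; apply NNPP; intro Hn; apply Cz, (H1 z), Hn.
        intros Cz; apply E; auto. }
  set (f := fun x => proj1_sig (constructive_indefinite_description _ (Hgen x))).
  assert (Hfx : forall x z, ~ oset (W x) z <-> closure Y (fun w => w = f x) z).
  { intros x. exact (proj2_sig (constructive_indefinite_description _ (Hgen x))). }
  assert (Key : forall (V : opens Y) x, oset V (f x) <-> oset (phi V) x).
  { intros V x. split.
    - intros Vy. apply NNPP; intro Hn. apply HW in Hn.
      refine (proj2 (Hfx x (f x)) _ (Hn _ Vy)). intros C HC HCy. apply HCy; auto.
    - intros Hx. apply NNPP; intro Hn.
      assert (Hsub : @lle (Lopen Y) V (W x)).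
      { intros z Vz. apply NNPP; intro Wz. apply Hfx in Wz.
        apply (Wz (fun w => ~ oset V w)).
        + unfold closed. apply (opn_ext Y (oset V)); [|apply (proj2_sig V)].
          intros w; split; auto. intros h; apply NNPP; auto.
        + intros w ->; auto.
        + auto. }
      apply HW in Hsub; auto. }
  assert (Hf : continuous X Y f).
  { intros V HV. apply (opn_ext X (oset (phi (exist _ V HV)))); [|apply (proj2_sig (phi _))].
    intros x. rewrite <- (Key (exist _ V HV) x). simpl; tauto. }
  exists f, Hf. intros V. apply opens_ext. intros x. unfold lopen_map, oset at 2; simpl.
  rewrite <- Key. tauto.
Qed.

Lemma pw_mono (L : latdata) (HL : ideal_lattice L) (c : lcar L) k j :
  lle (pw L c (k + j)) (pw L c k).
Proof. rewrite pw_add; auto. apply (mul_le_l L HL). Qed.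

Lemma pw_semiprime (L : latdata) (HL : ideal_lattice L) (c b : lcar L) : semiprime L b ->
  forall n, lle (pw L c n) b -> lle c b.
Proof.
  intros Hb.
  assert (P : forall n, lle (pw L c (S n)) b -> lle c b).
  { induction n as [|n IH]; intros H.
    - eapply le_trans; eauto. rewrite <- (il_mul1r _ HL c) at 1. apply le_refl; auto.
    - apply IH. apply Hb. rewrite <- pw_add; auto. eapply le_trans; [auto| |exact H].
      replace (S n + S n) with (S (S n) + n) by lia. apply pw_mono; auto. }
  intros [|n] H; [|apply P with n; auto].
  eapply le_trans; eauto. apply le_top; auto.
Qed.

Lemma D_incl (L : latdata) (HL : ideal_lattice L) (a b : lcar L) : semiprime L b ->
  (forall p, Dset L a p -> Dset L b p) -> lle a b.
Proof.
  intros Hb H. apply NNPP; intro Hn.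
  destruct (il_algebraic _ HL a) as [B [HB EB]].
  assert (Hc : exists c, B c /\ ~ lle c b).
  { apply NNPP; intro H'. apply Hn. rewrite EB. apply sup_least; auto. intros c Bc.
    apply NNPP; intro; apply H'; eauto. }
  destruct Hc as [c [Bc Hcb]].
  destruct (prime_exists L HL b c (HB c Bc)) as [p [Hp [Hbp Hcp]]].
  { intros n Hn'. apply Hcb. eapply pw_semiprime; eauto. }
  apply (H (exist _ p Hp)); simpl; auto.
  intros Hap. apply (Hcp 1). eapply le_trans; auto. apply pw_le1; auto.
  eapply le_trans; eauto. rewrite EB. apply sup_ub; auto.
Qed.

Lemma Lopen_semiprime (L : latdata) (HL : ideal_lattice L) :
  (exists (X : top), spectral X /\
        exists (phi : lcar L -> lcar (Lopen X)) (psi : lcar (Lopen X) -> lcar L),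
          is_hom L (Lopen X) phi /\ is_hom (Lopen X) L psi /\
          (forall a, psi (phi a) = a) /\ (forall U, phi (psi U) = U))
     <-> (forall a : lcar L, semiprime L a).
Proof.
  split.
  - intros [X [HX [phi [psi [Hphi [Hpsi [E1 E2]]]]]]] a b Hb.
    assert (HLX := Lopen_il X HX).
    rewrite <- (E1 b), <- (E1 a). apply (hom_mono _ _ HLX HL psi Hpsi).
    apply (hom_mono _ _ HL HLX phi Hphi) in Hb. rewrite (proj2 (proj2 Hphi)) in Hb.
    intros x Hx. apply Hb. rewrite omul; auto.
  - intros Hsp. exists (Spec L HL). split; [apply spec_spectral|].
    set (phi := fun a : lcar L => exist _ (Dset L a) (ex_intro _ a (fun p => iff_refl _)) : lcar (Lopen (Spec L HL))).
    set (psi := fun U : lcar (Lopen (Spec L HL)) => lsup (fun a => forall p, Dset L a p -> oset U p)).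
    assert (Hphi : is_hom L (Lopen (Spec L HL)) phi).
    { destruct (adj_b L HL (Spec L HL) (fun p => p) (fun V HV => HV)) as [H Hh].
      replace phi with (fun a => exist _ _ (H a)); auto.
      apply functional_extensionality; intros a. apply sig_eq. reflexivity. }
    assert (E1 : forall a, psi (phi a) = a).
    { intros a. apply le_anti; auto.
      - apply sup_least; auto. intros b Hb. apply D_incl; auto.
      - apply sup_ub; auto. }
    assert (E2 : forall U, phi (psi U) = U).
    { intros U. apply opens_ext. intros p. simpl. unfold psi. rewrite (D_sup L HL). split.
      - intros [a [Ha Da]]; auto.
      - intros Up. destruct (proj2_sig U) as [a0 Ha0]. exists a0. split.
        + intros q Dq. apply Ha0; auto.
        + apply Ha0; auto. }
    exists phi, psi. split; [auto|split; [apply (inv_hom _ _ phi psi Hphi E1 E2)|split; auto]].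
Qed.

Theorem mainTheorem8 :
  (* ---- Spec and L_open are (contravariant) functors ---- *)
  (* Spec L is a spectral space *)
  (forall (L : latdata) (HL : ideal_lattice L), spectral (Spec L HL)) /\
  (* L_open(X) is an ideal lattice *)
  (forall X : top, spectral X -> ideal_lattice (Lopen X)) /\
  (* a morphism psi : L' -> L induces a continuous map Spec L -> Spec L' *)
  (forall (L L' : latdata) (HL : ideal_lattice L) (HL' : ideal_lattice L')
          (psi : lcar L' -> lcar L),
      is_hom L' L psi ->
      exists H : forall p, prime L p -> prime L' (spec_map psi p),
        continuous (Spec L HL) (Spec L' HL')
          (fun p => exist _ (spec_map psi (proj1_sig p)) (H _ (proj2_sig p)))) /\
  (* functoriality of Spec: identities and composites *)
  (forall (L : latdata), ideal_lattice L ->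
      forall p, prime L p -> spec_map (fun a : lcar L => a) p = p) /\
  (forall (L1 L2 L3 : latdata), ideal_lattice L1 -> ideal_lattice L2 -> ideal_lattice L3 ->
      forall (psi1 : lcar L1 -> lcar L2) (psi2 : lcar L2 -> lcar L3),
      is_hom L1 L2 psi1 -> is_hom L2 L3 psi2 ->
      forall p, prime L3 p ->
        spec_map (fun a => psi2 (psi1 a)) p = spec_map psi1 (spec_map psi2 p)) /\
  (* a continuous map g : X -> Y induces a morphism L_open(Y) -> L_open(X) *)
  (forall (X Y : top), spectral X -> spectral Y ->
      forall (g : pt X -> pt Y) (Hg : continuous X Y g),
        is_hom (Lopen Y) (Lopen X) (lopen_map g Hg)) /\
  (* ---- the adjunction ---- *)
  (forall (L : latdata) (HL : ideal_lattice L) (X : top), spectral X ->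
    (* phi |-> (x |-> sup{c compact | x notin phi(c)}) lands in continuous maps X -> Spec L *)
    (forall phi : lcar L -> lcar (Lopen X), is_hom L (Lopen X) phi ->
       exists H : forall x, prime L (phi_of (fun a => oset (phi a)) x),
         continuous X (Spec L HL) (fun x => exist _ _ (H x))) /\
    (* f |-> (a |-> f^{-1}(D(a))) lands in morphisms L -> L_open(X) *)
    (forall f : pt X -> pt (Spec L HL), continuous X (Spec L HL) f ->
       exists H : forall a, opn (psi_of (fun x => proj1_sig (f x)) a),
         is_hom L (Lopen X) (fun a => exist _ _ (H a))) /\
    (* the two assignments are mutually inverse *)
    (forall phi : lcar L -> lcar (Lopen X), is_hom L (Lopen X) phi ->
       forall a, psi_of (phi_of (fun b => oset (phi b))) a = oset (phi a)) /\
    (forall f : pt X -> pt (Spec L HL), continuous X (Spec L HL) f ->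
       forall x, phi_of (psi_of (fun y => proj1_sig (f y))) x = proj1_sig (f x)) /\
    (* naturality in L *)
    (forall (L' : latdata) (HL' : ideal_lattice L') (psi : lcar L' -> lcar L),
       is_hom L' L psi ->
       forall phi : lcar L -> lcar (Lopen X), is_hom L (Lopen X) phi ->
       forall x, phi_of (fun a' => oset (phi (psi a'))) x
                 = spec_map psi (phi_of (fun a => oset (phi a)) x)) /\
    (* naturality in X *)
    (forall (Y : top), spectral Y -> forall (g : pt Y -> pt X) (Hg : continuous Y X g),
       forall phi : lcar L -> lcar (Lopen X), is_hom L (Lopen X) phi ->
       forall y, phi_of (fun a => oset (lopen_map g Hg (phi a))) y
                 = phi_of (fun a => oset (phi a)) (g y))) /\
  (* ---- L_open is fully faithful ---- *)
  (forall (X Y : top), spectral X -> spectral Y ->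
    (forall (f g : pt X -> pt Y) (Hf : continuous X Y f) (Hg : continuous X Y g),
       (forall V, lopen_map f Hf V = lopen_map g Hg V) -> forall x, f x = g x) /\
    (forall phi : lcar (Lopen Y) -> lcar (Lopen X), is_hom (Lopen Y) (Lopen X) phi ->
       exists (f : pt X -> pt Y) (Hf : continuous X Y f),
         forall V, phi V = lopen_map f Hf V)) /\
  (* ---- essential image of L_open ---- *)
  (forall L : latdata, ideal_lattice L ->
    ((exists (X : top), spectral X /\
        exists (phi : lcar L -> lcar (Lopen X)) (psi : lcar (Lopen X) -> lcar L),
          is_hom L (Lopen X) phi /\ is_hom (Lopen X) L psi /\
          (forall a, psi (phi a) = a) /\ (forall U, phi (psi U) = U))
     <-> (forall a : lcar L, semiprime L a))).
Proof.
  split; [exact spec_spectral|].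
  split; [exact Lopen_il|].
  split.
  { intros L L' HL HL' psi Hpsi. exists (spec_map_prime L L' HL HL' psi Hpsi).
    apply spec_map_cont. }
  split; [intros L HL p _; apply spec_map_id; auto|].
  split; [intros L1 L2 L3 H1 H2 H3 psi1 psi2 K1 K2 p _; apply (spec_map_comp L1 L2 L3 H1 H2 H3); auto|].
  split; [intros X Y _ _ g Hg; apply lopen_hom|].
  split.
  { intros L HL X HX. split; [apply adj_a; auto|].
    split; [apply adj_b|].
    split; [apply adj_c; auto|].
    split; [intros f _; apply adj_d|].
    split; [intros L' HL' psi Hpsi phi Hphi x; apply adj_e; auto|].
    intros Y HY g Hg phi Hphi y. reflexivity. }
  split.
  { intros X Y HX HY. split.
    - intros f g Hf Hg. apply faithful; auto.
    - apply full; auto. }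
  intros L HL. exact (Lopen_semiprime L HL).
Qed.
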